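(* Let $n\in\mathbb N_0$, $j\in\mathbb Z$, $s\in\mathbb N_0$ and $1\le\ell\le a^d_n$. Then for all $x\in\mathbb B^d$ and $\xi\in\mathbb S^{d-1}$, $$\Delta^sY^{n,j}_\ell(x)=Y^{n,j-s}_\ell(x)\qquad\text{and}\qquad\Delta^sY^{n,j}_\ell(\xi)=\delta_{s,j}Y^n_\ell(\xi).$$
   Context: $\mathbb B^d$ unit ball, $\mathbb S^{d-1}$ unit sphere in $\mathbb R^d$; $(a)_0=1$, $(a)_m=a(a+1)\cdots(a+m-1)$. $\mathcal H^d_n$: homogeneous harmonic polynomials of degree $n$, $a^d_n=\dim\mathcal H^d_n$, $\{Y^n_\ell\}_{\ell=1}^{a^d_n}$ an orthonormal basis of $\mathcal H^d_n$ with respect to the normalized surface measure on $\mathbb S^{d-1}$. For $n,j\in\mathbb N_0$ let $(c^{n,j}_i)_{0\le i\le j}$ be the unique solution of the linear system $$4^k\sum_{i=k}^j(-i)_k(-k)_{i-k}\frac{(n+d/2)_k}{(n+d/2)_{i-k}}c_i=\delta_{k,j},\qquad 0\le k\le j,$$ and set $Y^{n,j}_\ell(x)=\sum_{i=0}^jc^{n,j}_i(1-\|x\|^2)^iY^n_\ell(x)$; for $j<0$ set $Y^{n,j}_\ell:=0$. *)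

(* Defs.v *)
From HB Require Import structures.
From mathcomp Require Import all_boot all_order all_algebra.
From mathcomp Require Import reals.
From mathcomp Require Import mpoly.
Set Implicit Arguments. Unset Strict Implicit. Unset Printing Implicit Defensive.
Import Order.TTheory GRing.Theory Num.Theory.
Local Open Scope ring_scope.

Section Defs.
Variables (R : realType) (d : nat).

Definition poch (a : R) (m : nat) : R := \prod_(k < m) (a + k%:R).

Definition laplacian (p : {mpoly R[d]}) : {mpoly R[d]} :=
  \sum_(i < d) mderiv i (mderiv i p).

Definition laplacian_iter (s : nat) (p : {mpoly R[d]}) : {mpoly R[d]} :=
  iter s laplacian p.

Definition homogeneous (n : nat) (p : {mpoly R[d]}) : bool :=
  p \is @ishomog1 d R n mdeg.

Definition harmonic_homogeneous (n : nat) (p : {mpoly R[d]}) : Prop :=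
  homogeneous n p /\ laplacian p = 0.

Definition one_minus_norm2 : {mpoly R[d]} := 1 - \sum_(i < d) 'X_i ^+ 2.

Definition norm2 (x : 'I_d -> R) : R := \sum_(i < d) x i ^+ 2.

(* (c_i)_{0<=i<=j} solves the linear system of the paper defining c^{n,j} *)
Definition solves_system (n j : nat) (c : nat -> R) : Prop :=
  forall k : nat, (k <= j)%N ->
    4 ^+ k * \sum_(k <= i < j.+1)
      (poch (- i%:R) k * poch (- k%:R) (i - k)
        * poch (n%:R + d%:R / 2) k / poch (n%:R + d%:R / 2) (i - k)) * c i
    = (k == j)%:R.

(* Y^{n,j} built from Y in H^d_n and a family of coefficient sequences
   c j = (c^{n,j}_i)_i ; zero for negative j *)
Definition Ynj (c : nat -> nat -> R) (Y : {mpoly R[d]}) (j : int)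
  : {mpoly R[d]} :=
  match j with
  | Posz j => \sum_(i < j.+1) c j i *: (one_minus_norm2 ^+ i * Y)
  | Negz _ => 0
  end.

End Defs.

(* Main.v *)
Require Import Defs.
From HB Require Import structures.
From mathcomp Require Import all_boot all_order all_algebra.
From mathcomp Require Import reals.
From mathcomp Require Import mpoly.
From mathcomp Require Import ring lra zify.
Import Order.TTheory GRing.Theory Num.Theory.
Local Open Scope ring_scope.
Section S.
Variables (R : realType) (d : nat).
Implicit Types (p q : {mpoly R[d]}).

Lemma mderivXU (i k : 'I_d) : mderiv k ('X_i : {mpoly R[d]}) = (i == k)%:R.
Proof.
rewrite mderivX mnm1E; case: eqP => [->|_]; last by rewrite scale0r.
have -> : (U_(k) - U_(k) = 0)%MM by apply/mnmP=> l; rewrite !mnmE subnn.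
by rewrite mpolyX0 scale1r.
Qed.

Lemma mderiv_exp k p i :
  mderiv k (p ^+ i) = i%:R *: (p ^+ i.-1 * mderiv k p).
Proof.
elim: i => [|i IH]; first by rewrite expr0 -[1]mpolyX0 mderivX mnm0E scale0r scale0r.
rewrite exprS mderivM IH /=; case: i IH => [|i] IH.
  by rewrite expr0 /= scale0r mulr0 addr0 mulr1 scale1r mul1r.
rewrite -scalerAr mulrA -exprS [_ * p ^+ _]mulrC -[X in X + _]scale1r -scalerDl.
by rewrite -natr1 addrC !natr1.
Qed.

Lemma lap_mul p q : laplacian (p * q) =
  laplacian p * q + 2%:R *: \sum_(k < d) (mderiv k p * mderiv k q) + p * laplacian q.
Proof.
rewrite /laplacian scaler_sumr mulr_suml mulr_sumr -!big_split /=.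
apply: eq_bigr => k _; rewrite !mderivM !mderivD !mderivM.
rewrite -mul_mpolyC mpolyC_nat. ring.
Qed.

Lemma mderiv_u k : mderiv k (one_minus_norm2 R d) = - (2%:R *: 'X_k).
Proof.
rewrite /one_minus_norm2 mderivB -[1]mpolyX0 mderivX mnm0E scale0r sub0r.
rewrite (raddf_sum (mderiv k)).
rewrite (bigD1 k) //= big1; last first.
  by move=> i /negbTE ik; rewrite mderiv_exp mderivXU ik mulr0 scaler0.
by rewrite addr0 mderiv_exp mderivXU eqxx /= expr1 mulr1.
Qed.

Lemma euler n p : p \is @ishomog1 d R n mdeg ->
  \sum_(k < d) ('X_k * mderiv k p) = n%:R *: p.
Proof.
move=> /dhomogP hp.
rewrite {2}[p]mpolyE scaler_sumr.
under eq_bigr do rewrite /mderiv mulr_sumr.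
rewrite exchange_big /=; rewrite big_seq [in RHS]big_seq.
apply: eq_bigr => m mp.
have e : n = (\sum_(i < d) m i)%N by rewrite -(hp m mp); exact: mdegE.
rewrite e natr_sum scaler_suml.
apply: eq_bigr => k _.
rewrite -scalerAr [RHS]scalerA.
have [->|nz] := eqVneq (m k) 0%N; first by rewrite !mul0r !scale0r.
congr (_ *: _).
rewrite -mpolyXD; congr 'X_[_].
by rewrite addmC submK // lep1mP.
Qed.
End S.

Section S2.
Variables (R : realType) (d : nat).
Local Notation u := (one_minus_norm2 R d).

Lemma lap_u_pow i : laplacian (u ^+ i) =
  (i%:R * (i.-1)%:R * 4)%:MP * (u ^+ (i.-1.-1) * \sum_(k < d) 'X_k ^+ 2)
  - (i%:R * 2 * d%:R)%:MP * u ^+ i.-1.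
Proof.
rewrite /laplacian.
transitivity (\sum_(k < d) ((i%:R * (i.-1)%:R * 4)%:MP * (u ^+ (i.-1.-1) * 'X_k ^+ 2)
  - (i%:R * 2)%:MP * u ^+ i.-1)).
  apply: eq_bigr => k _.
  rewrite mderiv_exp mderiv_u mderivZ mderivM mderiv_exp mderiv_u mderivN mderivZ mderivXU eqxx.
  move: (u ^+ i.-1.-1) (u ^+ i.-1) => a b.
  rewrite -!mul_mpolyC (_ : true%:R = 1) //. ring.
rewrite big_split /= sumrN -mulr_sumr.
rewrite sumr_const card_ord -mulr_sumr -mulr_natr.
move: (u ^+ i.-2) (u ^+ i.-1) => a b. ring.
Qed.

Lemma lap_uY n Y i : harmonic_homogeneous n Y ->
  laplacian (u ^+ i * Y) = (4 * i%:R * (i.-1)%:R) *: (u ^+ (i.-2) * Y)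
    - (4 * i%:R * ((i.-1)%:R + n%:R + d%:R / 2)) *: (u ^+ (i.-1) * Y).
Proof.
case=> hh hl; rewrite lap_mul hl mulr0 addr0 lap_u_pow.
have -> : \sum_(k < d) (mderiv k (u ^+ i) * mderiv k Y)
   = (- (i%:R * 2))%:MP * (u ^+ i.-1 * \sum_(k < d) ('X_k * mderiv k Y)).
  rewrite mulr_sumr mulr_sumr; apply: eq_bigr => k _.
  rewrite mderiv_exp mderiv_u -!mul_mpolyC. move: (u ^+ i.-1) => a. ring.
rewrite (euler _ _ _ _ hh).
have -> : \sum_(k < d) 'X_k ^+ 2 = 1 - u by rewrite /one_minus_norm2; ring.
have E : forall x y : R, 4 * x * (y + n%:R + d%:R / 2) = 4 * x * y + 4 * x * n%:R + 2 * x * d%:R.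
  by move=> x y; field.
rewrite E -!mul_mpolyC.
case: i => [|[|i]] /=.
- rewrite !expr0. ring.
- rewrite !expr0. ring.
- rewrite exprS. move: (u ^+ i) => a. ring.
Qed.
End S2.

Section Comb.
Variables (R : realType) (n d : nat) (hd : (0 < d)%N).
Local Notation a := (n%:R + d%:R / 2 : R).

Lemma pochS (x : R) m : poch x m.+1 = poch x m * (x + m%:R).
Proof. by rewrite /poch big_ord_recr. Qed.

Lemma pochSl (x : R) m : poch x m.+1 = x * poch (x + 1) m.
Proof.
rewrite /poch big_ord_recl /= addr0; congr (_ * _); apply: eq_bigr => i _.
by rewrite /bump /= natrD addrA.
Qed.

Lemma poch0 (x : R) : poch x 0 = 1.
Proof. by rewrite /poch big_ord0. Qed.

Lemma a_gt0 : 0 < a.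
Proof.
have : (0 < d%:R :> R) by rewrite ltr0n.
have : (0 <= n%:R :> R) by rewrite ler0n.
move=> *; lra.
Qed.

Lemma poch_a_gt0 m : 0 < poch a m.
Proof.
rewrite /poch; apply: prodr_gt0 => i _.
have := a_gt0; have : (0 <= i%:R :> R) by rewrite ler0n.
move=> *; lra.
Qed.

Lemma poch_negk_neq0 k : poch (- k%:R : R) k != 0.
Proof.
rewrite /poch; apply/prodf_neq0 => i _.
have : (i%:R < k%:R :> R) by rewrite ltr_nat.
move=> h; apply/eqP => h2; lra.
Qed.


Definition Mk (k i : nat) : R :=
  poch (- i%:R) k * poch (- k%:R) (i - k) * poch a k / poch a (i - k).
Definition F (k i : nat) : R := if (k <= i)%N then 4 ^+ k * Mk k i else 0.
Definition al (i : nat) : R := 4 * i%:R * (i.-1)%:R.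
Definition be (i : nat) : R := 4 * i%:R * ((i.-1)%:R + n%:R + d%:R / 2).

Lemma FS0 k : F k.+1 0 = 0.
Proof. by rewrite /F. Qed.

Lemma FS1 k : F k.+1 1 = - be 1 * F k 0.
Proof.
rewrite /F; case: k => [|k] /=; last by rewrite mulr0.
rewrite /Mk /be !subnn !poch0 !expr1 expr0 /poch !big_ord1 /= !addr0 !mul1r !divr1 mulr1.
ring.
Qed.

Lemma FkkN0 k : F k k != 0.
Proof.
rewrite /F leqnn /Mk subnn !poch0 mulr1 divr1.
rewrite !mulf_neq0 ?expf_neq0 ?poch_negk_neq0 // ?lt0r_neq0 ?poch_a_gt0 //.
Qed.

Lemma FSS k i : F k.+1 i.+2 = al i.+2 * F k i - be i.+2 * F k i.+1.
Proof.
rewrite /F /al /be.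
case: (ltngtP k i.+1) => hki.
-
  have hk : (k <= i)%N by [].
  have -> : (k < i.+2)%N by lia.
  rewrite hk.
  have [m ->] : exists m, i = (k + m)%N by exists (i - k)%N; lia.
  rewrite /Mk.
  have e1 : ((k + m).+2 - k.+1 = m.+1)%N by lia.
  have e2 : ((k + m) - k = m)%N by lia.
  have e3 : ((k + m).+1 - k = m.+1)%N by lia.
  rewrite e1 e2 e3 /=.
  have h1 : poch (- ((k + m).+2)%:R : R) k.+1 = - ((k + m).+2)%:R * poch (- ((k + m).+1)%:R) k.
    by rewrite pochSl -natr1 opprD addrNK.
  have h2 : poch (- (k.+1)%:R : R) m.+1 = - (k.+1)%:R * poch (- k%:R) m.
    by rewrite pochSl -natr1 opprD addrNK.
  have h3 : poch (- (k + m)%:R : R) k = poch (- ((k + m).+1)%:R) k * (m.+1)%:R / ((k + m).+1)%:R.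
    have e : (- ((k + m).+1)%:R + 1 : R) = - (k+m)%:R by rewrite -natr1 opprD addrNK.
    have h := pochS (- ((k + m).+1)%:R : R) k; rewrite pochSl e in h.
    have hx : (- ((k + m).+1)%:R : R) != 0 by rewrite oppr_eq0 pnatr_eq0.
    apply: (mulfI hx); rewrite h.
    rewrite -!natr1 !natrD. field.
    have : (0 <= k%:R :> R) by rewrite ler0n.
    have : (0 <= m%:R :> R) by rewrite ler0n.
    move=> *; apply/eqP; lra.
  have ha := a_gt0; have hW := poch_a_gt0 m.
  have eb : forall x : R, x + n%:R + d%:R / 2 = x + a by move=> x; rewrite -addrA.
  rewrite eb h1 h2 h3 !pochS.
  move: (poch a k) (poch a m) hW (poch (- ((k + m).+1)%:R : R) k) (poch (- k%:R : R) m) => A W hW X Yp.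
  move: a ha => a' ha.
  rewrite -!natr1 !natrD /=.
  have : (0 <= k%:R :> R) by rewrite ler0n.
  have : (0 <= m%:R :> R) by rewrite ler0n.
  move=> hm hk0.
  rewrite !exprS.
  field.
  by rewrite !lt0r_neq0 //; lra.
- have -> : (k < i.+2)%N = false by lia.
  have -> : (k <= i)%N = false by lia.
  by rewrite !mulr0 subr0.
- subst k.
  have -> : (i.+1 < i.+2)%N by lia.
  have -> : (i.+1 <= i)%N = false by lia.
  rewrite /Mk !subnn !poch0 !mulr1 !divr1 mulr0 sub0r.
  have e : (- (i.+2)%:R + 1 : R) = - (i.+1)%:R by rewrite -natr1 opprD addrNK.
  rewrite pochSl e [poch _ i.+2]pochS.
  have eb : forall x : R, x + n%:R + d%:R / 2 = x + a by move=> x; rewrite -addrA.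
  rewrite eb /= exprS.
  move: (poch a i.+1) (poch (- (i.+1)%:R : R) i.+1) => A X.
  move: a => a'.
  rewrite -!natr1.
  ring.
Qed.

Lemma F0 i : F 0 i = (i == 0%N)%:R.
Proof.
rewrite /F /Mk leq0n expr0 mul1r subn0 poch0 ?mulr1 ?mul1r.
case: i => [|i]; first by rewrite !poch0 mulr1 divr1.
by rewrite (pochSl (- 0%:R) i) oppr0 !mul0r.
Qed.

Lemma sys_F j (c : nat -> R) : solves_system d n j c ->
  forall k, (k <= j)%N -> \sum_(i < j.+1) F k i * c i = (k == j)%:R.
Proof.
move=> hc k hk; rewrite -(hc k hk) big_geq_mkord mulr_sumr [in RHS]big_mkcond.
apply: eq_bigr => i _ /=; rewrite /F; case: (k <= i)%N; last by rewrite mul0r.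
by rewrite /Mk -mulrA.
Qed.

Definition Te (e : nat -> R) (i : nat) : R := al i.+2 * e i.+2 - be i.+1 * e i.+1.

Lemma shiftF k N (e : nat -> R) : e N.+2 = 0 ->
  \sum_(i < N.+1) F k i * Te e i = \sum_(i < N.+2) F k.+1 i * e i.
Proof.
move=> hN; rewrite /Te.
under eq_bigr do rewrite mulrBr.
rewrite sumrB.
have -> : \sum_(i < N.+1) F k i * (al i.+2 * e i.+2) = \sum_(i < N) al i.+2 * F k i * e i.+2.
  rewrite big_ord_recr /= hN !mulr0 addr0.
  by apply: eq_bigr => i _; rewrite mulrA [F k i * _]mulrC.
have -> : \sum_(i < N.+1) F k i * (be i.+1 * e i.+1) = F k 0 * (be 1 * e 1%N) + \sum_(i < N) be i.+2 * F k i.+1 * e i.+2.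
  rewrite big_ord_recl /=; congr (_ + _).
  by apply: eq_bigr => i _; rewrite mulrA [F k _ * _]mulrC.
rewrite [in RHS]big_ord_recl [in RHS]big_ord_recl /= FS0 FS1 mul0r add0r.
have -> : \sum_(i < N) F k.+1 (bump 0 (bump 0 i)) * e (bump 0 (bump 0 i)) = 
   \sum_(i < N) al i.+2 * F k i * e i.+2 - \sum_(i < N) be i.+2 * F k i.+1 * e i.+2.
  rewrite -sumrB; apply: eq_bigr => i _.
  by rewrite /bump /= FSS mulrBl.
rewrite /bump /=.
ring.
Qed.


Lemma uniq_sys j (e e' : nat -> R) :
  (forall k, (k <= j)%N -> \sum_(i < j.+1) F k i * e i = \sum_(i < j.+1) F k i * e' i) ->
  forall m, (m <= j)%N -> e m = e' m.
Proof.
move=> h.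
pose g i := e i - e' i.
have hg : forall k, (k <= j)%N -> \sum_(i < j.+1) F k i * g i = 0.
  move=> k hk; rewrite /g; under eq_bigr do rewrite mulrBr.
  by rewrite sumrB h // subrr.
have key : forall m, (m <= j)%N -> (forall i, (m < i <= j)%N -> g i = 0) -> g m = 0.
  move=> m hm hi.
  have := hg m hm.
  rewrite (bigD1 (Ordinal (n:=j.+1) (m:=m) (leq_trans hm (leqnn _)))) //= big1.
    rewrite addr0 => /eqP; rewrite mulf_eq0 (negbTE (FkkN0 m)) /= => /eqP //.
  move=> i hne; rewrite /F.
  case: (ltngtP m i) => hmi.
  - by rewrite hi ?mulr0 // hmi /= -ltnS ltn_ord.
  - by rewrite mul0r.
  - by exfalso; move: hne; apply/negP; rewrite negbK; apply/eqP/val_inj.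
have P : forall t m, (j - t <= m <= j)%N -> g m = 0.
  elim=> [|t IH] m /andP[hm1 hm2]; apply: key => // i /andP[hi1 hi2].
  - lia.
  - apply: IH; apply/andP; split; lia.
move=> m hm; apply/eqP; rewrite -subr_eq0; apply/eqP.
by apply: (P j); apply/andP; split; lia.
Qed.


End Comb.

Section Main.
Variables (R : realType) (d : nat) (hd : (0 < d)%N) (n : nat).
Local Notation u := (one_minus_norm2 R d).

Lemma lap_linear : linear (@laplacian R d).
Proof.
move=> k p q; rewrite /laplacian scaler_sumr -big_split /=.
by apply: eq_bigr => i _; rewrite !linearP.
Qed.

HB.instance Definition _ := GRing.isLinear.Build R {mpoly R[d]} {mpoly R[d]} _
  (@laplacian R d) lap_linear.

Lemma lapP (Y : {mpoly R[d]}) (hY : harmonic_homogeneous n Y) (e : nat -> R) N :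
  e N.+2 = 0 ->
  laplacian (\sum_(i < N.+2) e i *: (u ^+ i * Y))
  = \sum_(i < N.+1) Te R n d e i *: (u ^+ i * Y).
Proof.
move=> hN.
rewrite raddf_sum /=.
under eq_bigr do rewrite linearZ /= (lap_uY _ _ _ _ _ hY) scalerBr !scalerA.
rewrite sumrB.
under [in RHS]eq_bigr do rewrite /Te scalerBl.
rewrite sumrB.
congr (_ - _).
  rewrite big_ord_recl big_ord_recl /= [in RHS]big_ord_recr /= hN.
  rewrite /al /bump /= !mulr0 !scale0r !add0r addr0.
  by apply: eq_bigr => i _; rewrite !add0n mulrC.
rewrite big_ord_recl /= !(mulr0, mul0r, scale0r, add0r).
by apply: eq_bigr => i _; rewrite /be /bump /= !add0n mulrC.
Qed.

Lemma lap_Ynj_succ (c : nat -> nat -> R)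
  (hc : forall j : nat, solves_system d n j (c j))
  (Y : {mpoly R[d]}) (hY : harmonic_homogeneous n Y) (j : nat) :
  laplacian (Ynj c Y j.+1) = Ynj c Y j.
Proof.
pose e' i := if (i < j.+2)%N then c j.+1 i else 0.
have -> : Ynj c Y j.+1 = \sum_(i < j.+2) e' i *: (u ^+ i * Y).
  by rewrite /=; apply: eq_bigr => i _; rewrite /e' ltn_ord.
rewrite (lapP _ hY); last by rewrite /e' ltnn.
rewrite /=; apply: eq_bigr => i _; congr (_ *: _).
apply: (uniq_sys R n d hd j) (ltn_ord i : (i <= j)%N) => k hk.
rewrite (shiftF _ _ _ hd); last by rewrite /e' ltnn.
rewrite (sys_F _ _ _ _ _ (hc j) _ hk).
have -> : \sum_(i0 < j.+2) F R n d k.+1 i0 * e' i0 = \sum_(i0 < j.+2) F R n d k.+1 i0 * c j.+1 i0.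
  by apply: eq_bigr => i0 _; rewrite /e' ltn_ord.
by rewrite (sys_F _ _ _ _ _ (hc j.+1)).
Qed.

Section Rest.
Variables (c : nat -> nat -> R) (hc : forall j : nat, solves_system d n j (c j))
  (Y : {mpoly R[d]}) (hY : harmonic_homogeneous n Y).

Lemma Ynj_neg (t : int) : (t < 0)%R -> Ynj c Y t = 0.
Proof. by case: t. Qed.

Lemma lap_Ynj (t : int) : laplacian (Ynj c Y t) = Ynj c Y (t - 1).
Proof.
case: t => [[|j]|m].
- rewrite [RHS]Ynj_neg //= big_ord1 linearZ /= expr0 mul1r.
  by case: hY => _ ->; rewrite scaler0.
- have -> : (Posz j.+1 - 1 = Posz j)%R by lia.
  exact: lap_Ynj_succ.
- rewrite Ynj_neg // ?linear0 ?Ynj_neg //; lia.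
Qed.

Lemma lap_iter s (t : int) : laplacian_iter s (Ynj c Y t) = Ynj c Y (t - s%:Z).
Proof.
elim: s => [|s IH]; first by rewrite subr0.
rewrite /laplacian_iter iterS -/(laplacian_iter s _) IH lap_Ynj.
congr Ynj; lia.
Qed.

Lemma c0 t : c t 0%N = (0%N == t)%:R.
Proof.
have := sys_F _ _ _ _ _ (hc t) 0%N (leq0n t).
rewrite big_ord_recl F0 /= mul1r big1 ?addr0 // => i _.
by rewrite F0 /bump /= mul0r.
Qed.

Lemma eval_u (x : 'I_d -> R) : u.@[x] = 1 - norm2 x.
Proof.
rewrite /one_minus_norm2 mevalB meval1 /norm2.
have -> : (\sum_(i < d) 'X_i ^+ 2 : {mpoly R[d]}).@[x] = \sum_(i < d) x i ^+ 2.
  rewrite (raddf_sum (meval x)); apply: eq_bigr => i _.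
  by rewrite /= [in LHS]expr2 mevalM mevalXU expr2.
by [].
Qed.

Lemma eval_Ynj (t : nat) (xi : 'I_d -> R) : norm2 xi = 1 ->
  (Ynj c Y t).@[xi] = (0%N == t)%:R * Y.@[xi].
Proof.
move=> h; rewrite /= raddf_sum big_ord_recl /= big1 ?addr0.
  by rewrite mevalZ mevalM expr0 meval1 mul1r c0.
move=> i _; rewrite mevalZ mevalM rmorphXn /= eval_u h subrr expr0n /=.
by rewrite mul0r mulr0.
Qed.

End Rest.
End Main.

Theorem lemma3p6 (R : realType) (d : nat) (hd : (0 < d)%N)
  (n : nat) (c : nat -> nat -> R)
  (hc : forall j : nat, solves_system d n j (c j))
  (Y : {mpoly R[d]}) (hY : harmonic_homogeneous n Y)
  (j : int) (s : nat) :
  (forall x : 'I_d -> R, norm2 x < 1 ->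
     (laplacian_iter s (Ynj c Y j)).@[x] = (Ynj c Y (j - s%:Z)).@[x]) /\
  (forall xi : 'I_d -> R, norm2 xi = 1 ->
     (laplacian_iter s (Ynj c Y j)).@[xi] = (j == s%:Z)%:R * Y.@[xi]).
Proof.
split.
  by move=> x _; rewrite (lap_iter _ _ hd _ _ hc _ hY).
move=> xi hxi; rewrite (lap_iter _ _ hd _ _ hc _ hY).
case E: (j - s%:Z)%R => [t|t].
  have -> : (j == s%:Z) = (0%N == t) by apply/idP/idP => /eqP h; apply/eqP; lia.
  exact: (eval_Ynj _ _ _ _ hc _ _ _ hxi).
rewrite (Ynj_neg _ _ _ _ (Negz t)) // meval0.
have -> : (j == s%:Z) = false by apply/negbTE/eqP => h; lia.
by rewrite mul0r.
Qed.
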